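(* Let $H_X\in\mathbb{F}_2^{m_X\times n}$ and $H_Z\in\mathbb{F}_2^{m_Z\times n}$ satisfy $H_XH_Z^{\mathsf T}=0$ over $\mathbb{F}_2$. Let $P\ge1$ and consider a CPM $P$ lift specified by shifts $s^X_{x,c}\in\mathbb{Z}_P$ for each nonzero entry $(x,c)$ of $H_X$ and $s^Z_{z,c}\in\mathbb{Z}_P$ for each nonzero entry $(z,c)$ of $H_Z$. Suppose there are a row $z$ of $H_Z$, four distinct rows $x_0,x_1,x_2,x_3$ of $H_X$, and four distinct columns $c_0,c_1,c_2,c_3$ such that, with indices modulo $4$, \[ \{c_{a-1},c_a\}\subseteq \mathrm{supp}(x_a)\cap\mathrm{supp}(z)\qquad(a=0,1,2,3). \] Then the Tanner graph of $H_X$ contains the 8-cycle $x_0-c_0-x_1-c_1-x_2-c_2-x_3-c_3-x_0$. Assume moreover that for each $a\in\{0,1,2,3\}$ the shifts satisfy the CSS zero constraint for the pair $(x_a,z)$ with the pair of shared columns $(c_{a-1},c_a)$, namely \[ s^X_{x_a,c_{a-1}}-s^Z_{z,c_{a-1}}-s^X_{x_a,c_a}+s^Z_{z,c_a}\equiv 0\pmod P \] (this is the case, in particular, when $\mathrm{supp}(x_a)\cap\mathrm{supp}(z)=\{c_{a-1},c_a\}$ and the lift satisfies the CSS zero constraints). Then the voltage of this 8-cycle is $0\pmod P$, and hence the cycle lifts to closed 8-cycles in every such CPM $P$ lift. The same statement holds with the roles of $X$ and $Z$ interchanged.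
   Context: The Tanner graph of a binary matrix $H$ is the bipartite graph with check nodes = rows, variable nodes = columns, and an edge $(r,c)$ iff $H_{rc}=1$; $\mathrm{supp}(x)$ denotes the set of columns where row $x$ is nonzero. A CPM $P$ lift replaces each nonzero entry $(r,c)$ with assigned shift $t\in\mathbb{Z}_P$ by the $P\times P$ circulant permutation matrix equal to the identity cyclically shifted by $t$, and each zero entry by the $P\times P$ zero block. CSS zero constraints: for every row $x$ of $H_X$ and row $z$ of $H_Z$, the (even-size) set of shared columns is partitioned into pairs, and for each pair $\{c,c'\}$ one imposes $s^X_{x,c}-s^Z_{z,c}-s^X_{x,c'}+s^Z_{z,c'}\equiv0\pmod P$; these guarantee the lifted matrices satisfy $\hat H_X\hat H_Z^{\mathsf T}=0$. The voltage of a Tanner cycle $r_0-c_0-r_1-c_1-\dots-r_{L-1}-c_{L-1}-r_0$ is the alternating signed sum of the shifts of its edges, $\sum_{a}(s_{r_a,c_{a-1}}-s_{r_a,c_a})$ (up to overall sign/orientation); a base cycle lifts to a closed cycle of the same length iff its voltage is $0\bmod P$. *)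

(* Defs.v *)
From mathcomp Require Import all_boot all_order all_algebra.
Set Implicit Arguments. Unset Strict Implicit. Unset Printing Implicit Defensive.
Import GRing.Theory Num.Theory.
Local Open Scope ring_scope.

Definition tanner {m n : nat} (H : 'M['F_2]_(m, n)) (r : 'I_m) (c : 'I_n) : bool :=
  H r c != 0.

Definition cycle8 {R C : eqType} (E : R -> C -> bool)
  (x0 x1 x2 x3 : R) (c0 c1 c2 c3 : C) : Prop :=
  uniq [:: x0; x1; x2; x3] /\ uniq [:: c0; c1; c2; c3] /\
  [/\ E x0 c0, E x1 c0, E x1 c1, E x2 c1 &
   [/\ E x2 c2, E x3 c2, E x3 c3 & E x0 c3]].

(* Tanner graph of the CPM-P lift of H with shifts s (values in Z_P represented
   by integers taken mod P): check (r,i) -- variable (c,j) iff H r c != 0 and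
   j = i + s r c (mod P), i.e. block (r,c) is the identity cyclically shifted by s r c. *)
Definition lift_tanner {m n : nat} (H : 'M['F_2]_(m, n)) (s : 'I_m -> 'I_n -> int)
  (P : nat) (v : 'I_m * 'I_P) (w : 'I_n * 'I_P) : bool :=
  (H v.1 w.1 != 0) && ((w.2 : nat)%:Z == ((v.2 : nat)%:Z + s v.1 w.1) %% (P : int))%Z.

Definition voltage8 {m n : nat} (s : 'I_m -> 'I_n -> int)
  (x0 x1 x2 x3 : 'I_m) (c0 c1 c2 c3 : 'I_n) : int :=
  (s x0 c3 - s x0 c0) + (s x1 c0 - s x1 c1) + (s x2 c1 - s x2 c2) + (s x3 c2 - s x3 c3).

Definition css_pair_constraint {mA mB n : nat}
  (sA : 'I_mA -> 'I_n -> int) (sB : 'I_mB -> 'I_n -> int) (P : nat)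
  (x : 'I_mA) (z : 'I_mB) (c c' : 'I_n) : Prop :=
  (sA x c - sB z c - sA x c' + sB z c' = 0 %[mod (P : int)])%Z.

(* One-sided statement: HA plays the role of H_X (four rows x_a), HB that of
   H_Z (one row z). *)
Definition eight_cycle_claim {mA mB n : nat}
  (HA : 'M['F_2]_(mA, n)) (HB : 'M['F_2]_(mB, n))
  (sA : 'I_mA -> 'I_n -> int) (sB : 'I_mB -> 'I_n -> int) (P : nat) : Prop :=
  forall (z : 'I_mB) (x0 x1 x2 x3 : 'I_mA) (c0 c1 c2 c3 : 'I_n),
    uniq [:: x0; x1; x2; x3] -> uniq [:: c0; c1; c2; c3] ->
    [/\ HA x0 c3 != 0, HA x0 c0 != 0, HB z c3 != 0 & HB z c0 != 0] ->
    [/\ HA x1 c0 != 0, HA x1 c1 != 0, HB z c0 != 0 & HB z c1 != 0] ->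
    [/\ HA x2 c1 != 0, HA x2 c2 != 0, HB z c1 != 0 & HB z c2 != 0] ->
    [/\ HA x3 c2 != 0, HA x3 c3 != 0, HB z c2 != 0 & HB z c3 != 0] ->
    cycle8 (tanner HA) x0 x1 x2 x3 c0 c1 c2 c3 /\
    ([/\ css_pair_constraint sA sB P x0 z c3 c0,
         css_pair_constraint sA sB P x1 z c0 c1,
         css_pair_constraint sA sB P x2 z c1 c2 &
         css_pair_constraint sA sB P x3 z c2 c3] ->
     (voltage8 sA x0 x1 x2 x3 c0 c1 c2 c3 = 0 %[mod (P : int)])%Z /\
     (forall i0 : 'I_P, exists (i1 i2 i3 j0 j1 j2 j3 : 'I_P),
        cycle8 (@lift_tanner mA n HA sA P) (x0, i0) (x1, i1) (x2, i2) (x3, i3)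
               (c0, j0) (c1, j1) (c2, j2) (c3, j3))).

(* Main.v *)
Require Import Defs.
From mathcomp Require Import all_boot all_order all_algebra.
From mathcomp Require Import zify ring.
Set Implicit Arguments. Unset Strict Implicit. Unset Printing Implicit Defensive.
Import GRing.Theory Num.Theory intZmod.
Local Open Scope ring_scope.

Section Aux.
Variable P : nat.
Hypothesis hP : (0 < P)%N.

Lemma ordz_lt (k : int) : (`|(k %% P)%Z|%N < P)%N.
Proof.
have P0 : (P : int) != 0 by rewrite eqz_nat -lt0n.
have h0 := modz_ge0 k P0.
have : (k %% P)%Z < P by apply: ltz_pmod; rewrite ltz_nat.
by move: h0; case: (k %% P)%Z => // a _; rewrite ltz_nat.
Qed.

Definition ordz (k : int) : 'I_P := Ordinal (ordz_lt k).

Lemma ordzE k : ((ordz k : nat) : int) = (k %% P)%Z.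
Proof.
have P0 : (P : int) != 0 by rewrite eqz_nat -lt0n.
rewrite /= gez0_abs //; exact: modz_ge0.
Qed.
End Aux.
Arguments ordz : simpl never.

Lemma uniq_pair (A B : eqType) (a0 a1 a2 a3 : A) (b0 b1 b2 b3 : B) :
  uniq [:: a0; a1; a2; a3] -> uniq [:: (a0, b0); (a1, b1); (a2, b2); (a3, b3)].
Proof.
move=> u; apply: (@map_uniq _ _ fst); exact: u.
Qed.

Lemma claim {mA mB n : nat}
  (HA : 'M['F_2]_(mA, n)) (HB : 'M['F_2]_(mB, n))
  (sA : 'I_mA -> 'I_n -> int) (sB : 'I_mB -> 'I_n -> int) (P : nat) :
  (0 < P)%N -> eight_cycle_claim HA HB sA sB P.
Proof.
move=> hP z x0 x1 x2 x3 c0 c1 c2 c3 ux uc [h03 h00 _ _] [h10 h11 _ _]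
  [h21 h22 _ _] [h32 h33 _ _].
split; first by split=> //; split=> //; split.
case=> e0 e1 e2 e3.
have V : (voltage8 sA x0 x1 x2 x3 c0 c1 c2 c3 = 0 %[mod (P : int)])%Z.
  have -> : voltage8 sA x0 x1 x2 x3 c0 c1 c2 c3 =
    (sA x0 c3 - sB z c3 - sA x0 c0 + sB z c0) +
    (sA x1 c0 - sB z c0 - sA x1 c1 + sB z c1) +
    (sA x2 c1 - sB z c1 - sA x2 c2 + sB z c2) +
    (sA x3 c2 - sB z c2 - sA x3 c3 + sB z c3).
    rewrite /voltage8; ring.
  have add0 : forall a b : int, (a = 0 %[mod (P:int)])%Z -> (b = 0 %[mod (P:int)])%Z ->
     (a + b = 0 %[mod (P:int)])%Z.
    by move=> a b ha hb; rewrite -modzDm ha hb mod0z addr0 mod0z.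
  by apply: (add0) => //; apply: (add0) => //; apply: (add0).
split=> // i0.
set a0 := sA x0 c0; set b1 := sA x1 c0; set a1 := sA x1 c1; set b2 := sA x2 c1.
set a2 := sA x2 c2; set b3 := sA x3 c2; set a3 := sA x3 c3.
pose S0 := (i0 : nat)%:Z + a0.
pose S1 := S0 - b1. pose S2 := S1 + a1. pose S3 := S2 - b2.
pose S4 := S3 + a2. pose S5 := S4 - b3. pose S6 := S5 + a3.
exists (ordz hP S1), (ordz hP S3), (ordz hP S5), (ordz hP S0), (ordz hP S2),
  (ordz hP S4), (ordz hP S6).
split; first exact: uniq_pair.
split; first exact: uniq_pair.
rewrite /lift_tanner /=.
have absmod : forall k : int, ((`|(k %% P)%Z|%N : int) = (k %% P)%Z).
  move=> k; rewrite gez0_abs //; apply: modz_ge0; by rewrite eqz_nat -lt0n.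
split; try by rewrite ?h00 ?h10 ?h11 ?h21 /= !absmod ?modzDml ?subrK /S0 /S1 /S2 /S3 /S4 /S5 /S6 ?eqxx.
split; try by rewrite ?h22 ?h32 ?h33 /= !absmod ?modzDml ?subrK /S0 /S1 /S2 /S3 /S4 /S5 /S6 ?eqxx.
rewrite h03 /= !absmod; apply/eqP.
have key : forall L R : int, R = L + voltage8 sA x0 x1 x2 x3 c0 c1 c2 c3 ->
  (L %% P)%Z = (R %% P)%Z.
  by move=> L R ->; rewrite -modzDmr V mod0z addr0.
apply: key; rewrite /S6 /S5 /S4 /S3 /S2 /S1 /S0 /voltage8 /a0 /b1 /a1 /b2 /a2 /b3 /a3; ring.
Qed.

Theorem mainTheorem3 (mX mZ n : nat)
  (HX : 'M['F_2]_(mX, n)) (HZ : 'M['F_2]_(mZ, n))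
  (P : nat) (sX : 'I_mX -> 'I_n -> int) (sZ : 'I_mZ -> 'I_n -> int) :
  HX *m HZ^T = 0 -> (0 < P)%N ->
  eight_cycle_claim HX HZ sX sZ P /\ eight_cycle_claim HZ HX sZ sX P.
Proof. by move=> _ hP; split; apply: claim. Qed.
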